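(* Let $\mathcal{G}$ be a connected undirected unweighted graph with $n\ge 2$ vertices, $s\ne t$ vertices, $\epsilon\in(0,1)$, and let $L$ be an integer with $L\ge 2\kappa(\mathcal{L})\log\frac{n}{\epsilon}$. Then $r_{\mathcal{G},L}(s,t)\approx_\epsilon r_{\mathcal{G}}(s,t)$.
   Context: $\mathbf{D}$ is the degree matrix, $\mathbf{A}$ the adjacency matrix, $\mathbf{L}=\mathbf{D}-\mathbf{A}$, $\mathbf{P}=\mathbf{A}\mathbf{D}^{-1}$, $\mathcal{L}=\mathbf{D}^{-1/2}\mathbf{L}\mathbf{D}^{-1/2}$ the normalized Laplacian, and $\kappa(\mathcal{L})=\lambda_{\max}(\mathcal{L})/\lambda_2(\mathcal{L})$ with $\lambda_2(\mathcal{L})$ the smallest nonzero eigenvalue. $r_{\mathcal{G}}(s,t)=(\mathbf{e}_s-\mathbf{e}_t)^T\mathbf{L}^\dagger(\mathbf{e}_s-\mathbf{e}_t)$ and the $L$-step truncated effective resistance is $r_{\mathcal{G},L}(s,t)=\frac{1}{2}(\mathbf{e}_s-\mathbf{e}_t)^T\mathbf{D}^{-1}\sum_{l=0}^{L}(\frac12\mathbf{I}+\frac12\mathbf{P})^l(\mathbf{e}_s-\mathbf{e}_t)$. $x\approx_\epsilon y$ means $(1-\epsilon)y\le x\le(1+\epsilon)y$; $\log$ is the natural logarithm. *)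

(* Defs.v *)
From mathcomp Require Import all_boot all_order all_algebra.
From mathcomp Require Import reals exp.
Set Implicit Arguments. Unset Strict Implicit. Unset Printing Implicit Defensive.
Import Order.TTheory GRing.Theory Num.Theory.
Local Open Scope ring_scope.

Section Graph.
Variables (R : realType) (n : nat) (e : rel 'I_n).

Definition simple_graph := symmetric e /\ irreflexive e.
Definition connected_graph := forall x y : 'I_n, connect e x y.

Definition adjm : 'M[R]_n := \matrix_(i, j) (e i j)%:R.
Definition deg (i : 'I_n) : R := \sum_j adjm i j.
Definition degm : 'M[R]_n := \matrix_(i, j) (deg i *+ (i == j)).
Definition degm_inv : 'M[R]_n := \matrix_(i, j) ((deg i)^-1 *+ (i == j)).
Definition degm_invsqrt : 'M[R]_n :=
  \matrix_(i, j) ((Num.sqrt (deg i))^-1 *+ (i == j)).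
Definition lapm : 'M[R]_n := degm - adjm.
Definition walkm : 'M[R]_n := adjm *m degm_inv.
Definition nlapm : 'M[R]_n := degm_invsqrt *m lapm *m degm_invsqrt.

Definition bvec (s t : 'I_n) : 'cV[R]_n := delta_mx s 0 - delta_mx t 0.

(* effective resistance r_G(s,t) = b^T L^+ b, where Lp is the pseudoinverse *)
Definition eff_res (Lp : 'M[R]_n) (s t : 'I_n) : R :=
  ((bvec s t)^T *m Lp *m bvec s t) 0 0.

Definition trunc_eff_res (L : nat) (s t : 'I_n) : R :=
  2^-1 * ((bvec s t)^T *m degm_inv
     *m (\sum_(0 <= l < L.+1) (2^-1 *: 1%:M + 2^-1 *: walkm) ^+ l)
     *m bvec s t) 0 0.
End Graph.

Definition is_pinv (R : realType) (n : nat) (M X : 'M[R]_n) :=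
  [/\ M *m X *m M = M, X *m M *m X = X, (M *m X)^T = M *m X & (X *m M)^T = X *m M].

Definition is_max_eigen (R : realType) (n : nat) (M : 'M[R]_n) (lmax : R) :=
  eigenvalue M lmax /\ forall a, eigenvalue M a -> a <= lmax.

Definition is_min_nz_eigen (R : realType) (n : nat) (M : 'M[R]_n) (l2 : R) :=
  [/\ eigenvalue M l2, l2 != 0 & forall a, eigenvalue M a -> a != 0 -> l2 <= a].

Definition approx_eps (R : realType) (eps x y : R) :=
  (1 - eps) * y <= x /\ x <= (1 + eps) * y.

(* Main.v *)
Require Import Defs.
From mathcomp Require Import all_boot all_order all_algebra.
From mathcomp Require Import reals exp.
From mathcomp Require Import sequences.
From mathcomp Require Import spectral sesquilinear complex.
From mathcomp Require Import ring lra zify.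
Import Order.TTheory GRing.Theory Num.Theory.
Local Open Scope ring_scope.


Section Spec.
Variable R : realType.
Local Notation C := (R[i]).
Local Notation fc := (real_complex R).

Lemma fc_real (x : R) : fc x \is Num.real.
Proof. by apply/complex_realP; exists x. Qed.

Lemma conj_fc (x : R) : (fc x)^* = fc x.
Proof. exact: conj_Creal (fc_real x). Qed.

Section Phi.
Variables (n : nat) (P : 'M[C]_n).
Hypothesis Pu : P \in unitmx.
Definition Phi (h : 'rV[C]_n) := invmx P *m diag_mx h *m P.

Lemma diag_mxM (h g : 'rV[C]_n) :
  diag_mx h *m diag_mx g = diag_mx (\row_i (h 0 i * g 0 i)).
Proof.
apply/matrixP => i j; rewrite mul_diag_mx !mxE.
by case: (i == j); rewrite ?mulr1n ?mulr0n ?mulr0.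
Qed.

Lemma Phi_mul h g : Phi h *m Phi g = Phi (\row_i (h 0 i * g 0 i)).
Proof.
rewrite /Phi !mulmxA -[invmx P *m diag_mx h *m P *m invmx P]mulmxA mulmxV //.
by rewrite mulmx1 -[invmx P *m _ *m _]mulmxA diag_mxM.
Qed.

Lemma Phi_add h g : Phi h + Phi g = Phi (h + g).
Proof.
rewrite /Phi -mulmxDl -mulmxDr; congr (_ *m _ *m _).
by apply/matrixP => i j; rewrite !mxE mulrnDl.
Qed.

Lemma Phi_scale a h : a *: Phi h = Phi (a *: h).
Proof.
rewrite /Phi scalemxAl scalemxAr; congr (_ *m _ *m _).
by apply/matrixP => i j; rewrite !mxE mulrnAr.
Qed.

Lemma Phi_1 : 1%:M = Phi (const_mx 1).
Proof. by rewrite /Phi diag_const_mx mulmx1 mulVmx. Qed.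

Lemma Phi_exp h k : Phi h ^+ k = Phi (\row_i (h 0 i ^+ k)).
Proof.
elim: k => [|k IH].
  rewrite expr0; transitivity (1%:M : 'M[C]_n) => //; rewrite Phi_1; congr Phi; by apply/rowP => i; rewrite !mxE expr0.
rewrite exprS IH -mulmxE Phi_mul; congr Phi; by apply/rowP => i; rewrite !mxE exprS.
Qed.

Lemma Phi_opp h : - Phi h = Phi (- h).
Proof. by rewrite -scaleN1r Phi_scale scaleN1r. Qed.
End Phi.

Lemma map_mxXn n (A : 'M[R]_n) k : map_mx fc (A ^+ k) = (map_mx fc A) ^+ k.
Proof.
elim: k => [|k IH]; first by rewrite !expr0 map_mx1.
by rewrite !exprS -!mulmxE map_mxM IH.
Qed.

Lemma spec_form n (N : 'M[R]_n) (g a b : R) (k : nat) :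
  N^T = N ->
  (forall x, eigenvalue N x -> 0 <= g + a * x + b * (x * (1 - 2^-1 * x) ^+ k)) ->
  forall z : 'rV[R]_n,
  0 <= (z *m (g *: 1%:M + a *: N + b *: (N *m (1%:M - 2^-1 *: N) ^+ k)) *m z^T) 0 0.
Proof.
move=> NT Hev z.
set Nc := map_mx fc N.
have herm : Nc \is hermsymmx.
  rewrite is_hermitianmxE expr0 scale1r; apply/eqP/matrixP => i j; rewrite !mxE.
  have := congr1 (fun M : 'M[R]_n => M i j) NT; rewrite mxE => ->.
  by rewrite conj_fc.
have /orthomx_spectralP hN := hermitian_normalmx herm.
set P := spectralmx Nc in hN; set d := spectral_diag Nc in hN.
have Pu : P \in unitmx := spectral_unit Nc.
have dreal : forall i, d 0 i \is Num.real.
  by move=> i; have /mxOverP := hermitian_spectral_diag_real herm; apply.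
pose av i := complex.Re (d 0 i).
have dE : forall i, d 0 i = fc (av i) by move=> i; rewrite /av RRe_real.
have eig : forall i, eigenvalue N (av i).
  move=> i.
  have PN : P *m Nc = diag_mx d *m P by rewrite {1}hN !mulmxA mulmxV // mul1mx.
  have : eigenvalue Nc (d 0 i).
    apply/eigenvalueP; exists (row i P).
      by rewrite -row_mul PN row_mul row_diag_mx -scalemxAl -rowE.
    apply/eqP => h0; have := congr1 (mulmx^~ (invmx P)) h0.
    rewrite -row_mul mulmxV // mul0mx => /rowP/(_ i); rewrite !mxE eqxx /=.
    by move/eqP; rewrite oner_eq0.
  by rewrite !eigenvalue_root_char -map_char_poly dE fmorph_root.
pose h := \row_i fc (g + a * av i + b * (av i * (1 - 2^-1 * av i) ^+ k)).
have Tc : map_mx fc (g *: 1%:M + a *: N + b *: (N *m (1%:M - 2^-1 *: N) ^+ k))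
          = Phi n P h.
  have hNP : Nc = Phi n P d := hN.
  rewrite !map_mxD !map_mxZ map_mxM map_mxXn map_mxB map_mxZ map_mx1 -/Nc hNP.
  rewrite (Phi_1 n P Pu) !Phi_scale Phi_opp !Phi_add (Phi_exp n P Pu) (Phi_mul n P Pu).
  rewrite !Phi_scale !Phi_add; congr Phi; apply/rowP => i; rewrite !mxE dE.
  by rewrite !(rmorphD, rmorphM, rmorphXn, rmorphB, rmorph1, rmorphN, fmorphV, rmorph_nat) /= !mulr1.
set T := (g *: 1%:M + _ + _) in Tc *.
have hq : fc ((z *m T *m z^T) 0 0) =
   (map_mx fc z *m map_mx fc T *m (map_mx fc z)^T) 0 0.
  transitivity ((map_mx fc (z *m T *m z^T)) 0 0); first by rewrite [RHS]mxE.
  rewrite !map_mxM; congr (fun_of_matrix (_ *m _) 0 0).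
  by apply/matrixP => i j; rewrite !mxE.
rewrite -ler0c /= hq Tc /Phi.
set zc := map_mx fc z.
rewrite !mulmxA -[_ *m P *m _]mulmxA mxE.
apply: sumr_ge0 => j _.
rewrite mul_mx_diag mxE.
have -> : (P *m zc^T) j 0 = ((zc *m invmx P) 0 j)^*.
  rewrite invmx_unitary ?spectral_unitarymx // !mxE rmorph_sum /=.
  by apply: eq_bigr => l _; rewrite !mxE rmorphM /= conjCK /zc conj_fc mulrC.
rewrite mulrAC mulrC; apply: mulr_ge0; last exact: mul_conjC_ge0.
by rewrite mxE ler0c; apply: Hev.
Qed.
End Spec.


Lemma tail_bound (R : realType) (n L : nat) (eps lmax l2 x : R) :
 0 < eps < 1 -> (1 <= n)%N -> 1 <= lmax -> 0 < l2 -> l2 <= x -> x <= 2 ->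
 2 * (lmax / l2) * ln (n%:R / eps) <= L%:R -> (1 - 2^-1 * x) ^+ L.+1 <= eps.
Proof.
move=> /andP[e0 e1] n1 lm1 l20 l2x x2 HL.
have y0 : 0 <= 1 - 2^-1 * x by lra.
have y1 : 1 - 2^-1 * x <= 1 by lra.
have c0 : ln (n%:R / eps) >= ln (eps^-1).
  rewrite ler_ln ?posrE ?invr_gt0 ?divr_gt0 ?ltr0n //.
  by rewrite -[X in X <= _]mul1r ler_pM2r ?invr_gt0 // ler1n.
have lneps : ln (eps^-1) = - ln eps by rewrite lnV ?posrE.
have lne0 : ln eps <= 0 by apply: ln_le0; lra.
set c := ln (n%:R / eps) in HL c0.
have xl : lmax <= (lmax / l2) * x.
  have lm0 : 0 < lmax by lra.
  rewrite -mulrA ler_pMr //.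
  by rewrite mulrC ler_pdivlMr // mul1r.
have key : - 2^-1 * x * L%:R <= ln eps.
  have cge0 : 0 <= c by lra.
  have h1 : lmax * c <= (lmax / l2) * x * c by have := @ler_wpM2r _ c cge0 lmax ((lmax/l2)*x) xl.
  have h2 : c <= lmax * c by exact: ler_peMl cge0 lm1.
  have h3 : (lmax / l2) * x * c * 2 <= x * L%:R.
    have := ler_wpM2l (ltW (lt_le_trans l20 l2x)) HL. move=> h.
    have -> : (lmax / l2) * x * c * 2 = x * (2 * (lmax / l2) * c) by ring.
    by rewrite mulrC in h; rewrite mulrC; apply: le_trans h; rewrite mulrC.
  lra.
have E1 : expR (- 2^-1 * x * L%:R) <= eps.
  by rewrite -[leRHS](lnK (x:=eps)) ?posrE // ler_expR.
have E2 : (1 - 2^-1 * x) ^+ L.+1 <= expR (- 2^-1 * x * L%:R).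
  rewrite expRM_natr exprSr.
  apply: le_trans (_ : (1 - 2^-1 * x) ^+ L <= _).
    by rewrite ler_piMr ?exprn_ge0.
  apply: lerXn2r; rewrite ?nnegrE ?expR_ge0 //.
  by have := expR_ge1Dx (- 2^-1 * x); lra.
exact: le_trans E2 E1.
Qed.


Lemma diag_mxM_gen (R : comPzRingType) n (h g : 'rV[R]_n) :
  diag_mx h *m diag_mx g = diag_mx (\row_i (h 0 i * g 0 i)).
Proof.
apply/matrixP => i j; rewrite mul_diag_mx !mxE.
by case: (i == j); rewrite ?mulr1n ?mulr0n ?mulr0.
Qed.

Section G.
Variables (R : realType) (n : nat) (e : rel 'I_n).
Hypotheses (esym : symmetric e) (eirr : irreflexive e)
  (dpos : forall i, 0 < deg R e i).

Local Notation A := (adjm R e).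
Local Notation d := (deg R e).
Local Notation D := (degm R e).
Local Notation Dinv := (degm_inv R e).
Local Notation H := (degm_invsqrt R e).
Local Notation Lap := (lapm R e).
Local Notation N := (nlapm R e).
Local Notation W := (walkm R e).

Definition sq i := Num.sqrt (d i).
Definition Gm : 'M[R]_n := diag_mx (\row_i sq i).

Lemma sq_gt0 i : 0 < sq i. Proof. by rewrite sqrtr_gt0. Qed.
Lemma sq_neq0 i : sq i != 0. Proof. by rewrite gt_eqF ?sq_gt0. Qed.

Lemma HE : H = diag_mx (\row_i (sq i)^-1).
Proof. by apply/matrixP => i j; rewrite !mxE. Qed.
Lemma DE : D = diag_mx (\row_i d i).
Proof. by apply/matrixP => i j; rewrite !mxE. Qed.
Lemma DinvE : Dinv = diag_mx (\row_i (d i)^-1).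
Proof. by apply/matrixP => i j; rewrite !mxE. Qed.

Lemma diag1 (h : 'rV[R]_n) : (forall i, h 0 i = 1) -> diag_mx h = 1%:M.
Proof.
move=> h1; rewrite -diag_const_mx; congr diag_mx; apply/rowP => i.
by rewrite h1 mxE.
Qed.

Lemma HG : H *m Gm = 1%:M.
Proof. by rewrite HE diag_mxM_gen diag1 // => i; rewrite !mxE mulVf ?sq_neq0. Qed.
Lemma GH : Gm *m H = 1%:M.
Proof. by rewrite HE diag_mxM_gen diag1 // => i; rewrite !mxE mulfV ?sq_neq0. Qed.
Lemma sq_sq i : sq i * sq i = d i.
Proof. by rewrite -expr2 sqr_sqrtr // ltW. Qed.
Lemma HH : H *m H = Dinv.
Proof.
rewrite HE diag_mxM_gen DinvE; congr diag_mx; apply/rowP => i.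
by rewrite !mxE -invfM sq_sq.
Qed.
Lemma HDH : H *m D *m H = 1%:M.
Proof.
rewrite HE DE !diag_mxM_gen diag1 // => i; rewrite !mxE -sq_sq.
by have := sq_neq0 i; move=> h; field.
Qed.
Lemma DDinv : D *m Dinv = 1%:M.
Proof.
by rewrite DE DinvE diag_mxM_gen diag1 // => i; rewrite !mxE mulfV // gt_eqF.
Qed.
Lemma DinvG : Dinv *m Gm = H.
Proof. by rewrite -HH -mulmxA HG mulmx1. Qed.

Lemma AT : A^T = A.
Proof. by apply/matrixP => i j; rewrite !mxE esym. Qed.
Lemma HT : H^T = H. Proof. by rewrite HE tr_diag_mx. Qed.
Lemma GT : Gm^T = Gm. Proof. by rewrite tr_diag_mx. Qed.
Lemma DT : D^T = D. Proof. by rewrite DE tr_diag_mx. Qed.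
Lemma LapT : Lap^T = Lap.
Proof. by rewrite /lapm linearB /= DT AT. Qed.
Lemma NT : N^T = N.
Proof. by rewrite /nlapm !trmx_mul HT LapT mulmxA. Qed.
Lemma LapE : Lap = Gm *m N *m Gm.
Proof. by rewrite /nlapm !mulmxA GH mul1mx -mulmxA HG mulmx1. Qed.

Definition Sm := 1%:M - 2^-1 *: N.

Lemma ME : 2^-1 *: 1%:M + 2^-1 *: W = Gm *m Sm *m H.
Proof.
rewrite /Sm mulmxBr mulmxBl mulmx1 GH -scalemxAr -scalemxAl /nlapm.
rewrite !mulmxA GH mul1mx -mulmxA HH /lapm mulmxBl DDinv -/(walkm R e).
apply/matrixP => i j; rewrite !mxE.
move: (\sum_j0 _) ((i == j)%:R) => x y.
lra.
Qed.

Lemma MX k : (2^-1 *: 1%:M + 2^-1 *: W) ^+ k = Gm *m Sm ^+ k *m H.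
Proof.
elim: k => [|k IH]; first by rewrite !expr0 mulmx1 GH.
rewrite exprS IH ME -mulmxE !mulmxA -(mulmxA _ H) HG mulmx1.
by rewrite exprS -mulmxE !mulmxA.
Qed.


Lemma tele K : (\sum_(0 <= l < K) Sm ^+ l) *m N = 2%:R *: (1%:M - Sm ^+ K).
Proof.
have hS : 1%:M - Sm = 2^-1 *: N by rewrite /Sm opprB addrC subrK.
suff h : (\sum_(0 <= l < K) Sm ^+ l) *m (1%:M - Sm) = 1%:M - Sm ^+ K.
  rewrite -h hS -scalemxAr scalerA mulfV ?scale1r //.
  by rewrite pnatr_eq0.
elim: K => [|K IH]; first by rewrite big_geq // mul0mx expr0 subrr.
rewrite big_nat_recr //= mulmxDl IH mulmxBr mulmx1 exprSr -mulmxE.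
by rewrite addrA subrK.
Qed.

Lemma truncE L (b : 'cV[R]_n) :
  2^-1 * (b^T *m Dinv *m
     (\sum_(0 <= l < L.+1) (2^-1 *: 1%:M + 2^-1 *: W) ^+ l) *m b) 0 0
  = 2^-1 * (b^T *m H *m (\sum_(0 <= l < L.+1) Sm ^+ l) *m H *m b) 0 0.
Proof.
congr (_ * _); congr (fun_of_matrix _ 0 0); congr (_ *m _).
rewrite -!mulmxA; congr (_ *m _).
rewrite mulmx_sumr mulmx_suml mulmx_sumr; apply: eq_bigr => l _.
by rewrite MX !mulmxA DinvG.
Qed.

Definition qf (M : 'M[R]_n) (u : 'rV[R]_n) := (u *m M *m u^T) 0 0.

Lemma qf_sum M u : qf M u = \sum_i \sum_j u 0 i * M i j * u 0 j.
Proof.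
rewrite /qf mxE.
under eq_bigr => j _ do rewrite !mxE mulr_suml.
exact: exchange_big.
Qed.

Lemma qfD M1 M2 u : qf (M1 + M2) u = qf M1 u + qf M2 u.
Proof. by rewrite /qf mulmxDr mulmxDl mxE. Qed.
Lemma qfZ a M u : qf (a *: M) u = a * qf M u.
Proof. by rewrite /qf -scalemxAr -scalemxAl mxE. Qed.
Lemma qfB M1 M2 u : qf (M1 - M2) u = qf M1 u - qf M2 u.
Proof. by rewrite -scaleN1r qfD qfZ mulN1r. Qed.

Definition QD (u : 'rV[R]_n) := \sum_i \sum_j A i j * u 0 i ^+ 2.
Definition QA (u : 'rV[R]_n) := \sum_i \sum_j A i j * (u 0 i * u 0 j).

Lemma qf_D u : qf D u = QD u.
Proof.
rewrite /qf DE mul_mx_diag mxE /QD; apply: eq_bigr => i _.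
by rewrite !mxE /deg mulr_sumr mulr_suml; apply: eq_bigr => j _; rewrite expr2; ring.
Qed.

Lemma qf_A u : qf A u = QA u.
Proof.
rewrite qf_sum /QA; apply: eq_bigr => i _; apply: eq_bigr => j _; ring.
Qed.

Lemma swap_sum (F : 'I_n -> R) :
  \sum_i \sum_j A i j * F j = \sum_i \sum_j A i j * F i.
Proof.
rewrite exchange_big; apply: eq_bigr => i _; apply: eq_bigr => j _.
by rewrite !mxE esym.
Qed.

Lemma sq_expand (c : R) (u : 'rV[R]_n) : c ^+ 2 = 1 ->
  \sum_i \sum_j A i j * (u 0 i + c * u 0 j) ^+ 2 = 2 * QD u + 2 * c * QA u.
Proof.
move=> c2.
transitivity (\sum_i \sum_j (A i j * u 0 i ^+ 2 + A i j * u 0 j ^+ 2 +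
     2 * c * (A i j * (u 0 i * u 0 j)))).
  apply: eq_bigr => i _; apply: eq_bigr => j _.
  rewrite sqrrD exprMn c2; ring.
under eq_bigr => i _ do rewrite !big_split /= -mulr_sumr.
rewrite !big_split /= -mulr_sumr (swap_sum (fun j => u 0 j ^+ 2)) /QD /QA; ring.
Qed.

Lemma qf_Lap u : qf Lap u = 2^-1 * \sum_i \sum_j A i j * (u 0 i - u 0 j) ^+ 2.
Proof.
have := sq_expand (-1) u; rewrite sqrrN expr1n => /(_ erefl).
under eq_bigr => i _ do under eq_bigr => j _ do rewrite mulN1r.
move=> ->; rewrite /lapm qfB qf_D qf_A; by field.
Qed.

Lemma qf_DA u : qf (D + A) u = 2^-1 * \sum_i \sum_j A i j * (u 0 i + u 0 j) ^+ 2.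
Proof.
have := sq_expand 1 u; rewrite expr1n => /(_ erefl).
under eq_bigr => i _ do under eq_bigr => j _ do rewrite mul1r.
move=> ->; rewrite qfD qf_D qf_A; by field.
Qed.

Lemma A_ge0 i j : 0 <= A i j. Proof. by rewrite mxE ler0n. Qed.

Lemma qf_Lap_ge0 u : 0 <= qf Lap u.
Proof.
rewrite qf_Lap mulr_ge0 // ?invr_ge0 ?ler0n //.
by apply: sumr_ge0 => i _; apply: sumr_ge0 => j _; rewrite mulr_ge0 ?A_ge0 ?sqr_ge0.
Qed.

Lemma qf_DA_ge0 u : 0 <= qf (D + A) u.
Proof.
rewrite qf_DA mulr_ge0 // ?invr_ge0 ?ler0n //.
by apply: sumr_ge0 => i _; apply: sumr_ge0 => j _; rewrite mulr_ge0 ?A_ge0 ?sqr_ge0.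
Qed.

Lemma qf_conj M u : qf (H *m M *m H) u = qf M (u *m H).
Proof. by rewrite /qf trmx_mul HT !mulmxA. Qed.

Lemma qf1_gt0 (v : 'rV[R]_n) : v != 0 -> 0 < qf 1%:M v.
Proof.
move=> vnz; rewrite /qf mulmx1 mxE.
have h : forall j : 'I_n, true -> 0 <= v 0 j * v^T j 0.
  by move=> j _; rewrite mxE -expr2 sqr_ge0.
rewrite lt_def sumr_ge0 // andbT; apply/eqP => /(psumr_eq0P h) h0.
move/eqP: vnz; apply; apply/rowP => j; rewrite mxE.
by have /eqP := h0 j erefl; rewrite mxE mulf_eq0 orbb => /eqP.
Qed.

Lemma eig_range x : eigenvalue N x -> 0 <= x <= 2.
Proof.
case/eigenvalueP => v vN vnz.
have vv0 := qf1_gt0 v vnz.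
have qN : qf N v = x * qf 1%:M v.
  by rewrite /qf vN -scalemxAl mxE mulmx1.
have N1 : N = 1%:M - H *m A *m H.
  by rewrite /nlapm /lapm mulmxBr mulmxBl HDH.
have N2 : H *m (D + A) *m H = 1%:M + H *m A *m H.
  by rewrite mulmxDr mulmxDl HDH.
apply/andP; split.
  rewrite -(pmulr_lge0 _ vv0) -qN /nlapm qf_conj; exact: qf_Lap_ge0.
have : 0 <= qf (H *m (D + A) *m H) v by rewrite qf_conj; exact: qf_DA_ge0.
rewrite N2 qfD.
have -> : qf (H *m A *m H) v = qf 1%:M v - qf N v by rewrite N1 qfB opprB addrC subrK.
rewrite qN => h.
have : 0 <= (2 - x) * qf 1%:M v by lra.
by rewrite pmulr_lge0 // subr_ge0.
Qed.

Lemma N_diag s : qf N (delta_mx 0 s) = 1.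
Proof.
rewrite /qf -rowE trmx_delta -colE /nlapm HE mul_mx_diag mul_diag_mx !mxE.
rewrite eqxx mulr1n eirr /= subr0 -sq_sq.
by have := sq_neq0 s => h; field.
Qed.

Lemma ker_const (u : 'rV[R]_n) : connected_graph e -> u *m Lap = 0 ->
  forall x y, u 0 x = u 0 y.
Proof.
move=> conn hu.
have q0 : qf Lap u = 0 by rewrite /qf hu mul0mx mxE.
rewrite qf_Lap in q0.
move/eqP: q0; rewrite mulf_eq0 invr_eq0 pnatr_eq0 /= => /eqP q0.
have ge0 : forall i : 'I_n, true -> 0 <= \sum_j A i j * (u 0 i - u 0 j) ^+ 2.
  by move=> i _; apply: sumr_ge0 => j _; rewrite mulr_ge0 ?A_ge0 ?sqr_ge0.
have edge : forall i j, e i j -> u 0 i = u 0 j.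
  move=> i j eij.
  have h1 := @psumr_eq0P _ _ _ _ ge0 q0 i erefl.
  have ge0' : forall j : 'I_n, true -> 0 <= A i j * (u 0 i - u 0 j) ^+ 2.
    by move=> k _; rewrite mulr_ge0 ?A_ge0 ?sqr_ge0.
  have := @psumr_eq0P _ _ _ _ ge0' h1 j erefl.
  rewrite mxE eij mul1r => /eqP; rewrite sqrf_eq0 subr_eq0 => /eqP.
  done.
move=> x y; have /connectP [p pth ->] := conn x y.
elim: p x pth => [|z p IH] x //= /andP [exz pth].
by rewrite (edge x z exz); exact: IH.
Qed.

Lemma range_b (b : 'rV[R]_n) : connected_graph e -> b *m (const_mx 1 : 'cV[R]_n) = 0 ->
  (0 < n)%N -> exists w : 'rV[R]_n, b = w *m Lap.
Proof.
move=> conn b1 n0.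
pose ones : 'cV[R]_n := const_mx 1.
have LapOnes : Lap *m ones = 0.
  apply/matrixP => i j; rewrite /lapm /ones mulmxBl DE mul_diag_mx !mxE /deg.
  have -> : \sum_k A i k * (const_mx 1 : 'cV[R]_n) k j = \sum_k A i k.
    by apply: eq_bigr => k _; rewrite !mxE mulr1.
  by rewrite mulr1 subrr.
have kerLap : (kermx Lap <= ones^T)%MS.
  apply/row_subP => i; set u := row i (kermx Lap).
  have hu : u *m Lap = 0 by rewrite /u -row_mul mulmx_ker row0.
  have hc := ker_const u conn hu.
  have -> : u = u 0 (Ordinal n0) *: ones^T.
    by apply/rowP => j; rewrite -(hc j (Ordinal n0)) !mxE mulr1.
  by rewrite scalemx_sub // submx_refl.
have rk1 : (\rank (kermx Lap) <= 1)%N.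
  exact: leq_trans (mxrankS kerLap) (rank_leq_row _).
rewrite mxrank_ker in rk1.
pose K1 := kermx ones.
have LapK1 : (Lap <= K1)%MS by apply/sub_kermxP.
have rko : \rank ones = 1%N.
  apply/eqP; rewrite eqn_leq rank_leq_col lt0n mxrank_eq0.
  apply/eqP => /matrixP /(_ (Ordinal n0) 0); rewrite !mxE => /eqP.
  by rewrite oner_eq0.
have rkK1 : \rank K1 = (n - 1)%N by rewrite mxrank_ker rko.
have rkL : (\rank Lap <= n)%N := rank_leq_row _.
have eqr : (\rank Lap == \rank K1)%N.
  have := mxrankS LapK1; rewrite rkK1 => h; apply/eqP; lia.
have K1L : (K1 <= Lap)%MS by rewrite -((mxrank_leqif_sup LapK1).2).
have bK1 : (b <= K1)%MS by apply/sub_kermxP.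
have /submxP [w ->] := submx_trans bK1 K1L.
by exists w.
Qed.

End G.



Lemma main_sec (R : realType) (n : nat) (e : rel 'I_n) (s t : 'I_n)
  (eps lmax l2 : R) (Lp : 'M[R]_n) (L : nat) :
  symmetric e -> irreflexive e -> (forall i, 0 < deg R e i) ->
  connected_graph e -> (1 <= n)%N ->
  0 < eps < 1 ->
  is_max_eigen (nlapm R e) lmax -> is_min_nz_eigen (nlapm R e) l2 ->
  is_pinv (lapm R e) Lp ->
  2 * (lmax / l2) * ln (n%:R / eps) <= L%:R ->
  approx_eps eps (trunc_eff_res R e L s t) (eff_res Lp s t).
Proof.
move=> esym eirr dpos conn n1 epsr [eigmax maxH] [eigl2 l2nz l2min]
  [P1 P2 P3 P4] HL.
set N := nlapm R e.
pose beta := (bvec R s t)^T.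
have beta1 : beta *m (const_mx 1 : 'cV[R]_n) = 0.
  apply/matrixP => i j.
  rewrite /beta /bvec linearB /= !trmx_delta mulmxBl -!rowE !mxE subrr.
  done.
have [w hw] := range_b R n e esym beta conn beta1 n1.
have rE : eff_res Lp s t = qf R n (lapm R e) w.
  rewrite /eff_res.
  have -> : bvec R s t = (w *m lapm R e)^T by rewrite -hw trmxK.
  rewrite trmxK trmx_mul (LapT _ _ _ esym) /qf !mulmxA.
  by rewrite -(mulmxA w (lapm R e) Lp) -(mulmxA w _ (lapm R e)) P1.
pose z := w *m Gm R n e.
have rz : qf R n (lapm R e) w = qf R n N z.
  by rewrite /qf (LapE _ _ _ dpos) /z trmx_mul GT !mulmxA.
pose K := L.+1.
pose S := Sm R n e.
have bH : (bvec R s t)^T *m degm_invsqrt R e = z *m N.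
  rewrite -/beta hw (LapE _ _ _ dpos) /z !mulmxA -(mulmxA _ (Gm R n e)) GH //.
  by rewrite mulmx1.
have Hb : degm_invsqrt R e *m bvec R s t = N^T *m z^T.
  by rewrite -trmx_mul -bH trmx_mul trmxK HT.
have tE : trunc_eff_res R e L s t = qf R n N z - qf R n (N *m S ^+ K) z.
  rewrite /trunc_eff_res (truncE _ _ _ dpos).
  rewrite -(mulmxA _ (degm_invsqrt R e) (bvec R s t)) Hb bH (NT _ _ _ esym).
  rewrite -mulmxA -(mulmxA z) (mulmxA _ _ (z^T)) (tele R n e K) /qf.
  rewrite -scalemxAl -!scalemxAr mxE mulrA mulVf ?pnatr_eq0 // mul1r.
  rewrite (mulmxA N) (mulmxA z) mulmxBr mulmx1.
  by rewrite (mulmxA z) -[LHS]/(qf R n (N - N *m S ^+ K) z) qfB /qf !mulmxA.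
have NTr : N^T = N := NT R n e esym.
have qexp : forall (g a b : R) (X : 'M[R]_n) (u : 'rV[R]_n),
  qf R n (g *: 1%:M + a *: N + b *: X) u =
  g * qf R n 1%:M u + a * qf R n N u + b * qf R n X u.
  by move=> g a b X u; rewrite !qfD !qfZ.
have erange : forall x, eigenvalue N x -> 0 <= x <= 2 := eig_range R n e esym dpos.
have l20 : 0 < l2.
  have /andP [h _] := erange _ eigl2.
  by rewrite lt_def l2nz.
have lm1 : 1 <= lmax.
  have := spec_form R n N lmax (-1) 0 K NTr.
  have H1 : forall x, eigenvalue N x ->
      0 <= lmax + -1 * x + 0 * (x * (1 - 2^-1 * x) ^+ K).
    by move=> x /maxH hx; lra.
  move=> /(_ H1 (delta_mx 0 s)).
  rewrite -[X in 0 <= X]/(qf R n _ _) qexp N_diag //.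
  have -> : qf R n 1%:M (delta_mx 0 s) = 1.
    by rewrite /qf mulmx1 -rowE trmx_delta !mxE !eqxx.
  lra.
have Ea : 0 <= qf R n (N *m S ^+ K) z.
  have := spec_form R n N 0 0 1 K NTr.
  have H1 : forall x, eigenvalue N x ->
      0 <= 0 + 0 * x + 1 * (x * (1 - 2^-1 * x) ^+ K).
    move=> x /erange /andP [x0 x2].
    rewrite mul0r !add0r mul1r mulr_ge0 // exprn_ge0 //; lra.
  move=> /(_ H1 z); rewrite -[X in 0 <= X]/(qf R n _ _) qexp.
  rewrite -/S; lra.
have Eb : qf R n (N *m S ^+ K) z <= eps * qf R n N z.
  have := spec_form R n N 0 eps (-1) K NTr.
  have H1 : forall x, eigenvalue N x ->
      0 <= 0 + eps * x + -1 * (x * (1 - 2^-1 * x) ^+ K).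
    move=> x ex; have /andP [x0 x2] := erange _ ex.
    have [->|xnz] := eqVneq x 0; first by rewrite !mul0r; lra.
    have l2x := l2min x ex xnz.
    have tb := tail_bound R n L eps lmax l2 x epsr n1 lm1 l20 l2x x2 HL.
    have := @ler_wpM2l _ x x0 _ _ tb.
    lra.
  move=> /(_ H1 z); rewrite -[X in 0 <= X]/(qf R n _ _) qexp.
  rewrite -/S; lra.
rewrite /approx_eps tE rE rz.
have e0 : 0 < eps by case/andP: epsr.
have QN0 : 0 <= qf R n N z.
  have h : 0 <= eps * qf R n N z by lra.
  by rewrite pmulr_rge0 in h.
split; nra.
Qed.

Theorem lemma3p2 (R : realType) (n : nat) (e : rel 'I_n) (s t : 'I_n)
  (eps lmax l2 : R) (Lp : 'M[R]_n) (L : nat) :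
  simple_graph e -> connected_graph e -> (2 <= n)%N -> s != t ->
  0 < eps < 1 ->
  is_max_eigen (nlapm R e) lmax -> is_min_nz_eigen (nlapm R e) l2 ->
  is_pinv (lapm R e) Lp ->
  2 * (lmax / l2) * ln (n%:R / eps) <= L%:R ->
  approx_eps eps (trunc_eff_res R e L s t) (eff_res Lp s t).
Proof.
move=> [esym eirr] conn n2 _ epsr hmax hmin hp HL.
have h0 : (0 < n)%N by lia.
have h1 : (1 < n)%N by lia.
have dpos : forall i, 0 < deg R e i.
  move=> i.
  have [j hj] : exists j : 'I_n, j != i.
    case: (eqVneq i (Ordinal h0)) => [->|ne].
      by exists (Ordinal h1); apply/eqP => /(congr1 val).
    by exists (Ordinal h0); rewrite eq_sym.
  have /connectP [p pth ej] := conn i j.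
  case: p pth ej => [|y p] /=; first by move=> _ ej; rewrite ej eqxx in hj.
  case/andP => eiy _ _.
  rewrite /deg (bigD1 y) //= mxE eiy /=.
  have : 0 <= \sum_(k | k != y) adjm R e i k.
    by apply: sumr_ge0 => k _; rewrite mxE ler0n.
  lra.
exact: (main_sec _ _ _ s t _ _ _ Lp L esym eirr dpos conn h0 epsr hmax hmin hp HL).
Qed.
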